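(* Let $\Pi$ be a ground HEX-program, let $\hat{\mathbf{A}}$ be a compatible set of $\Pi$, and let $\mathbf{A}$ be the restriction of $\hat{\mathbf{A}}$ to the non-replacement (ordinary) atoms. Let $U$ be an unfounded set of $\Pi$ with respect to $\mathbf{A}$. If there are no $x,y\in U$ with $x\rightarrow_e y$, then $U$ is an unfounded set of the guessing program $\hat\Pi$ with respect to $\hat{\mathbf{A}}$.
   Context: Ground HEX-programs. A ground ordinary atom is $p(c_1,\dots,c_\ell)$. A ground external atom is $\&g[\vec p](\vec c)$ with input list $\vec p$ (predicate names or constants) and output constants $\vec c$. A ground HEX-program is a finite set of rules $r$: $a_1\lor\dots\lor a_k\leftarrow b_1,\dots,b_m,\mathrm{not}\,b_{m+1},\dots,\mathrm{not}\,b_n$, with ordinary ground head atoms and each $b_j$ an ordinary or external ground atom; $H(r)$, $B^+(r)=\{b_1,\dots,b_m\}$, $B^-(r)=\{b_{m+1},\dots,b_n\}$, $B(r)$ the set of body literals. Interpretations: complete consistent sets $\mathbf{A}$ of signed literals $\mathbf{T}a$/$\mathbf{F}a$. $\mathbf{A}\models a$ (ordinary) iff $\mathbf{T}a\in\mathbf{A}$; $\mathbf{A}\models\&g[\vec p](\vec c)$ iff the Boolean oracle $f_{\&g}(\mathbf{A},\vec p,\vec c)=1$, whose value depends only on the extensions in $\mathbf{A}$ of the input predicates in $\vec p$; $\mathbf{A}\models\mathrm{not}\,b$ iff $\mathbf{A}\not\models b$. Unfounded sets: for a set $X$ of ordinary ground atoms appearing in a program $P$, $\mathbf{A}\,\dot\cup\neg.\,X=(\mathbf{A}\setminus\{\mathbf{T}a\mid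 a\in X\})\cup\{\mathbf{F}a\mid a\in X\}$; $X$ is an unfounded set of $P$ w.r.t. $\mathbf{A}$ iff for every $r\in P$ with $H(r)\cap X\neq\emptyset$: (i) some literal of $B(r)$ is false w.r.t. $\mathbf{A}$, or (ii) some literal of $B(r)$ is false w.r.t. $\mathbf{A}\,\dot\cup\neg.\,X$, or (iii) some atom of $H(r)\setminus X$ is true w.r.t. $\mathbf{A}$. Guessing program and compatible sets: $\hat\Pi$ is obtained from $\Pi$ by replacing each external atom $\&g[\vec p](\vec c)$ by a new ordinary replacement atom $e_{\&g[\vec p]}(\vec c)$ and adding the rule $e_{\&g[\vec p]}(\vec c)\lor ne_{\&g[\vec p]}(\vec c)\leftarrow$. A compatible set of $\Pi$ is an interpretation $\hat{\mathbf{A}}$ that is a (Gelfond–Lifschitz) answer set of $\hat\Pi$ such that $f_{\&g}(\hat{\mathbf{A}},\vec p,\vec c)=1$ iff $\mathbf{T}e_{\&g[\vec p]}(\vec c)\in\hat{\mathbf{A}}$ for all external atoms $\&g[\vec p](\vec c)$ of $\Pi$. Dependencies: $x\rightarrow_e y$ iff some $r\in\Pi$ has $x\in H(r)$ and an external atom $\&g[q_1,\dots,q_n](\vec e)\in B^+(r)\cup B^-(r)$ with some $q_i$ equal to the predicate of $y$. *)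

(* Defs.v *)
From Stdlib Require Import List.
Import ListNotations.
Set Implicit Arguments.

Section Hex.
Variables (Pred Const G : Type).

Record oatom := OAtom { apred : Pred; aargs : list Const }.

Inductive input := IPred (p : Pred) | IConst (c : Const).

Record eatom := EAtom { ename : G; einput : list input; eoutput : list Const }.

Inductive batom := BOrd (a : oatom) | BExt (e : eatom).

Record rule (H B : Type) := Rule { head : list H; pos : list B; neg : list B }.

(* interpretations: A a  <->  T a in A (complete and consistent) *)
Definition interp (H : Type) := H -> Prop.

Definition oracle := G -> interp oatom -> list input -> list Const -> Prop.

Definition oracle_ok (f : oracle) : Prop :=
  forall g p c (A1 A2 : interp oatom),
    (forall a, In (IPred (apred a)) p -> (A1 a <-> A2 a)) ->
    (f g A1 p c <-> f g A2 p c).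

Section Generic.
Variables (H B : Type).
Variable sat : interp H -> B -> Prop.
Variable batoms : B -> list H.

Definition appears (P : list (rule H B)) (a : H) : Prop :=
  exists r, In r P /\
    (In a (head r) \/ exists b, (In b (pos r) \/ In b (neg r)) /\ In a (batoms b)).

Definition body_false (I : interp H) (r : rule H B) : Prop :=
  (exists b, In b (pos r) /\ ~ sat I b) \/ (exists b, In b (neg r) /\ sat I b).

Definition upd (A : interp H) (X : H -> Prop) : interp H := fun a => A a /\ ~ X a.

Definition unfounded (P : list (rule H B)) (A : interp H) (X : H -> Prop) : Prop :=
  (forall a, X a -> appears P a) /\
  forall r, In r P -> (exists a, In a (head r) /\ X a) ->
    body_false A r \/ body_false (upd A X) r \/
    (exists a, In a (head r) /\ ~ X a /\ A a).
End Generic.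

Definition hex_program := list (rule oatom batom).

Definition sat_hex (f : oracle) (A : interp oatom) (b : batom) : Prop :=
  match b with
  | BOrd a => A a
  | BExt e => f (ename e) A (einput e) (eoutput e)
  end.

Definition batoms_hex (b : batom) : list oatom :=
  match b with BOrd a => [a] | BExt _ => [] end.

Definition unfounded_hex (f : oracle) (P : hex_program) (A : interp oatom)
  (X : oatom -> Prop) : Prop :=
  unfounded (sat_hex f) batoms_hex P A X.

Definition ext_in (P : hex_program) (e : eatom) : Prop :=
  exists r, In r P /\ (In (BExt e) (pos r) \/ In (BExt e) (neg r)).

Definition edep (P : hex_program) (x y : oatom) : Prop :=
  exists r e, In r P /\ In x (head r) /\
    (In (BExt e) (pos r) \/ In (BExt e) (neg r)) /\
    In (IPred (apred y)) (einput e).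

(* atoms of the guessing program: ordinary atoms and replacement atoms
   GRep true e = e_{&g[p]}(c), GRep false e = ne_{&g[p]}(c) *)
Inductive gatom := GOrd (a : oatom) | GRep (pol : bool) (e : eatom).

Definition guess_program := list (rule gatom gatom).

Definition repl (b : batom) : gatom :=
  match b with BOrd a => GOrd a | BExt e => GRep true e end.

Definition hat_rule (r : rule oatom batom) : rule gatom gatom :=
  Rule (map GOrd (head r)) (map repl (pos r)) (map repl (neg r)).

Definition ext_atoms_rule (r : rule oatom batom) : list eatom :=
  flat_map (fun b => match b with BExt e => [e] | BOrd _ => [] end) (pos r ++ neg r).

Definition guess_rule (e : eatom) : rule gatom gatom :=
  Rule [GRep true e; GRep false e] [] [].

Definition hat (P : hex_program) : guess_program :=
  map hat_rule P ++ map guess_rule (flat_map ext_atoms_rule P).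

Definition sat_ord (I : interp gatom) (b : gatom) : Prop := I b.
Definition batoms_ord (b : gatom) : list gatom := [b].

Definition unfounded_ord (P : guess_program) (A : interp gatom) (X : gatom -> Prop) : Prop :=
  unfounded sat_ord batoms_ord P A X.

(* M is a model of the GL-reduct P^I: rules whose negative body is satisfied
   by I, with the negative body removed *)
Definition model_of_reduct (P : guess_program) (I M : interp gatom) : Prop :=
  forall r, In r P -> (forall b, In b (neg r) -> ~ I b) ->
    (forall b, In b (pos r) -> M b) -> exists a, In a (head r) /\ M a.

Definition answer_set (P : guess_program) (I : interp gatom) : Prop :=
  model_of_reduct P I I /\
  forall M, model_of_reduct P I M -> (forall a, M a -> I a) -> forall a, I a -> M a.

Definition restr (Ah : interp gatom) : interp oatom := fun a => Ah (GOrd a).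

(* compatible sets; since f_{&g} depends only on the input predicates (all
   ordinary predicates of Pi), f_{&g}(Ah, ...) is evaluated on restr Ah *)
Definition compatible (f : oracle) (P : hex_program) (Ah : interp gatom) : Prop :=
  answer_set (hat P) Ah /\
  forall e, ext_in P e ->
    (f (ename e) (restr Ah) (einput e) (eoutput e) <-> Ah (GRep true e)).
End Hex.

Arguments GOrd {Pred Const G}.
Arguments GRep {Pred Const G}.

(* Main.v *)
Require Import Defs.
From Stdlib Require Import List.
Import ListNotations.

Theorem lemma2 (Pred Const G : Type) (f : oracle Pred Const G)
  (Hf : oracle_ok f)
  (Pi : hex_program Pred Const G) (Ahat : interp (gatom Pred Const G))
  (Hcomp : compatible f Pi Ahat)
  (U : oatom Pred Const -> Prop)
  (HU : unfounded_hex f Pi (restr Ahat) U)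
  (Hdep : ~ (exists x y, U x /\ U y /\ edep Pi x y)) :
  unfounded_ord (hat Pi) Ahat
    (fun g => match g with GOrd a => U a | GRep _ _ => False end).
Proof.
  destruct Hcomp as [_ Hext].
  destruct HU as [HUa HUr].
  split.
  - intros [a|pol e] Ha; [|contradiction].
    destruct (HUa a Ha) as [r [Hr [Hh | [b [Hb Hab]]]]].
    + exists (hat_rule r). split.
      * unfold hat. apply in_or_app. left. apply in_map. exact Hr.
      * left. simpl. apply in_map. exact Hh.
    + exists (hat_rule r). split.
      * unfold hat. apply in_or_app. left. apply in_map. exact Hr.
      * right. exists (GOrd a). split; [|simpl; auto].
        destruct b as [a'|e]; simpl in Hab; [|contradiction].
        destruct Hab as [->|[]].
        simpl. destruct Hb as [Hb|Hb]; [left|right];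
          change (GOrd a) with (repl (BOrd G a)); apply in_map; exact Hb.
  - intros r Hr [g [Hg HXg]].
    unfold hat in Hr. apply in_app_or in Hr. destruct Hr as [Hr|Hr].
    2:{ apply in_map_iff in Hr. destruct Hr as [e [<- _]].
        simpl in Hg. destruct Hg as [<-|[<-|[]]]; contradiction. }
    apply in_map_iff in Hr. destruct Hr as [r0 [<- Hr0]].
    simpl in Hg. apply in_map_iff in Hg. destruct Hg as [a [<- Ha]].
    simpl in HXg.
    assert (Hin : forall b, In b (pos r0) \/ In b (neg r0) ->
                  In (repl b) (pos (hat_rule r0)) \/ In (repl b) (neg (hat_rule r0))).
    { intros b [Hb|Hb]; [left|right]; simpl; apply in_map; exact Hb. }
    assert (Hext' : forall e, In (BExt e) (pos r0) \/ In (BExt e) (neg r0) ->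
              (f (ename e) (restr Ahat) (einput e) (eoutput e) <-> Ahat (GRep true e))).
    { intros e He. apply Hext. exists r0. auto. }
    assert (Hupd : forall e, In (BExt e) (pos r0) \/ In (BExt e) (neg r0) ->
       (f (ename e) (upd (restr Ahat) U) (einput e) (eoutput e) <->
        f (ename e) (restr Ahat) (einput e) (eoutput e))).
    { intros e He. apply Hf. intros a' Ha'. unfold upd. split; [tauto|].
      intro H. split; [exact H|]. intro HU'. apply Hdep.
      exists a, a'. split; [exact HXg|]. split; [exact HU'|].
      exists r0, e. auto. }
    destruct (HUr r0 Hr0 (ex_intro _ a (conj Ha HXg))) as [[[b [Hb Hs]]|[b [Hb Hs]]] | [[[b [Hb Hs]]|[b [Hb Hs]]] | [a' [Ha' [HU' HA']]]]].
    + left. left. exists (repl b). split; [simpl; apply in_map; exact Hb|].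
      destruct b as [a'|e]; simpl in *; unfold sat_ord.
      * exact Hs.
      * rewrite <- Hext'; auto.
    + left. right. exists (repl b). split; [simpl; apply in_map; exact Hb|].
      destruct b as [a'|e]; simpl in *; unfold sat_ord.
      * exact Hs.
      * apply Hext'; auto.
    + right. left. left. exists (repl b). split; [simpl; apply in_map; exact Hb|].
      destruct b as [a'|e]; simpl in *; unfold sat_ord, upd in *.
      * exact Hs.
      * intros [H _]. apply Hs. apply Hupd; auto. apply Hext'; auto.
    + right. left. right. exists (repl b). split; [simpl; apply in_map; exact Hb|].
      destruct b as [a'|e]; simpl in *; unfold sat_ord, upd in *.
      * exact Hs.
      * split; [|auto]. apply Hext'; auto. apply Hupd; auto.
    + right. right. exists (GOrd a'). split; [simpl; apply in_map; exact Ha'|].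
      simpl. auto.
Qed.
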